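(* Let $(\hat{x}_i,\hat{a}_i,\hat{y}_i)$, $i=1,\dots,N$, be observed data points in $\mathbb{R}^n\times\{0,1\}\times\mathbb{R}$ with empirical distribution $\hat{\mathbb{P}}^N=\frac1N\sum_{i=1}^N\delta_{(\hat{x}_i,\hat{a}_i,\hat{y}_i)}$ and empirical marginals $\hat{p}^N_a=\frac1N\#\{i:\hat{a}_i=a\}$. Let $\alpha,\beta\ge0$, let $c((x,a,y),(x',a',y'))=\alpha\|x-x'\|+\infty\cdot|a-a'|+\beta|y-y'|$ (with $\infty\cdot0=0$), and $W_c^2(\mathbb{P},\mathbb{Q})=\inf_{\pi\in\Pi(\mathbb{P},\mathbb{Q})}\mathbb{E}_\pi[c^2]$. Let $\mathcal{F}_{\mathcal{R}}$ be a set of probability distributions on $\mathbb{R}^n\times\{0,1\}\times\mathbb{R}$ and $\mathcal{F}_{\mathcal{R}}(\hat{p}^N)=\{\mathbb{Q}\in\mathcal{F}_{\mathcal{R}}:\mathbb{Q}(A=a)=\hat{p}^N_a\ \forall a\in\{0,1\}\}$. Suppose some $\mathbb{Q}\in\mathcal{F}_{\mathcal{R}}$ satisfies $W_c^2(\hat{\mathbb{P}}^N,\mathbb{Q})<\infty$. Then $$\inf_{\mathbb{Q}\in\mathcal{F}_{\mathcal{R}}}W_c^2(\hat{\mathbb{P}}^N,\mathbb{Q})=\inf_{\mathbb{Q}\in\mathcal{F}_{\mathcal{R}}(\hat{p}^N)}W_c^2(\hat{\mathbb{P}}^N,\mathbb{Q}).$$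
   Context: $\|\cdot\|$ is the Euclidean norm; $\Pi(\mathbb{P},\mathbb{Q})$ is the set of couplings of $\mathbb{P}$ and $\mathbb{Q}$. In the paper, $\mathcal{F}_{\mathcal{R}}$ is the set of distributions relative to which a regressor $\mathcal{R}:\mathbb{R}^n\to\mathbb{R}$ is fair under a chosen fairness criterion. *)

(* Defs.v *)
From HB Require Import structures.
From mathcomp Require Import all_boot all_order all_algebra.
From mathcomp Require Import all_classical all_reals all_analysis.
Set Implicit Arguments. Unset Strict Implicit. Unset Printing Implicit Defensive.
Import Order.TTheory GRing.Theory Num.Theory.
Local Open Scope classical_set_scope.
Local Open Scope ring_scope.

(* Sample space R^n x {0,1} x R ; R^n is n.-tuple R with the product
   (= Borel) sigma-algebra provided by MathComp-Analysis. *)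
Notation Z n R := (n.-tuple R * (bool * R))%type.

Definition eucl_dist (R : realType) (n : nat) (x x' : n.-tuple R) : R :=
  Num.sqrt (\sum_(i < n) (tnth x i - tnth x' i) ^+ 2).

(* c((x,a,y),(x',a',y')) = alpha ||x-x'|| + oo*|a-a'| + beta |y-y'|,
   with oo * 0 = 0. *)
Definition cost (R : realType) (n : nat) (alpha beta : R) (z z' : Z n R)
  : \bar R :=
  if z.2.1 == z'.2.1
  then (alpha * eucl_dist z.1 z'.1 + beta * `|z.2.2 - z'.2.2|)%:E
  else +oo%E.

Definition coupling (R : realType) (n : nat) (P : set (Z n R) -> \bar R)
  (Q : probability (Z n R) R) (pi : probability (Z n R * Z n R)%type R) : Prop :=
  (forall A, measurable A -> pi (fst @^-1` A) = P A) /\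
  (forall B, measurable B -> pi (snd @^-1` B) = Q B).

Definition W2 (R : realType) (n : nat) (alpha beta : R)
  (P : set (Z n R) -> \bar R) (Q : probability (Z n R) R) : \bar R :=
  ereal_inf [set v | exists pi : probability (Z n R * Z n R)%type R,
     coupling P Q pi /\
     v = (\int[pi]_w (cost alpha beta w.1 w.2 * cost alpha beta w.1 w.2))%E].

Definition empirical (R : realType) (n N : nat) (data : 'I_N -> Z n R)
  (A : set (Z n R)) : \bar R :=
  ((N%:R)^-1)%:E * (\sum_(i < N) \d_(data i) A)%E.

Definition emp_marg (R : realType) (n N : nat) (data : 'I_N -> Z n R)
  (a : bool) : R :=
  (#|[set i : 'I_N | (data i).2.1 == a]|)%:R / N%:R.

(* Main.v *)
Set Warnings "-all".
Require Import Defs.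
From HB Require Import structures.
From mathcomp Require Import all_boot all_order all_algebra.
From mathcomp Require Import all_classical all_reals all_analysis.
Import Order.TTheory GRing.Theory Num.Theory.
Local Open Scope classical_set_scope.
Local Open Scope ring_scope.

Lemma cost_ge0 (R : realType) (n : nat) (alpha beta : R) (z z' : Z n R) :
  0 <= alpha -> 0 <= beta -> (0 <= cost alpha beta z z')%E.
Proof.
move=> ha hb; rewrite /cost; case: ifP => _ //.
by rewrite lee_fin addr_ge0 // mulr_ge0 // sqrtr_ge0.
Qed.

Lemma mB (R : realType) (n : nat) (a : bool) :
  measurable [set z : Z n R | z.2.1 = a].
Proof.
have := @measurable_snd _ _ (n.-tuple R) (bool * R)%type measurableT
  (fst @^-1` [set a]).
rewrite setTI; apply.
have := @measurable_fst _ _ bool R measurableT [set a].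
by rewrite setTI; apply.
Qed.

Lemma null_S (R : realType) (n : nat) (alpha beta : R) (ha : 0 <= alpha)
  (hb : 0 <= beta) (pi : probability (Z n R * Z n R)%type R) (S : set (Z n R * Z n R))
  (mS : measurable S) (hS : forall w, S w -> w.1.2.1 != w.2.2.1)
  (hI : (\int[pi]_w (cost alpha beta w.1 w.2 * cost alpha beta w.1 w.2) < +oo)%E) :
  pi S = 0%E.
Proof.
set f := fun w : Z n R * Z n R => (cost alpha beta w.1 w.2 * cost alpha beta w.1 w.2)%E.
have f0 : forall w, (0 <= f w)%E by move=> w; rewrite mule_ge0 // cost_ge0.
have I0 : (0 <= \int[pi]_w f w)%E by apply: integral_ge0 => w _.
have hk : forall k : R, 0 <= k -> (k%:E * pi S <= \int[pi]_w f w)%E.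
  move=> k k0.
  rewrite ge0_integralTE //=.
  apply: ereal_sup_ubound => /=.
  exists (scale_nnsfun (indic_nnsfun R mS) k0).
    move=> w /=; rewrite /f /=.
    rewrite measurable_realfun.mindicE /indic; case: (boolP (w \in S)) => wS.
      have := hS w (set_mem wS); rewrite /cost; case: ifP => // _ _.
      by rewrite mulr1 mulyy leey.
    by rewrite mulr0 mule_ge0 // cost_ge0.
  transitivity (sintegral pi (cst k \* (HBNNSimple.NonNegSimpleFun.sort (indic_nnsfun R mS)))%R); first by [].
  rewrite sintegralrM; congr (_ * _)%E.
  rewrite -(sintegral_indic pi S); apply: eq_sintegral => x.
  by [].
move: I0 hI; case: (\int[pi]_w f w)%E hk => [r||] hk // r0 _.
have hle : (pi S <= 1)%E := probability_le1 pi mS.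
have hge : (0 <= pi S)%E := measure_ge0 pi S.
case E: (pi S) => [s||]; rewrite E in hle hge => //.
have s0 : 0 <= s by rewrite -lee_fin -E measure_ge0.
apply/eqP; rewrite eq_le !lee_fin s0 andbT.
rewrite leNgt; apply/negP => sp.
have := hk ((r + 1) / s); rewrite E -EFinM lee_fin mulfVK ?gt_eqF //.
rewrite lee_fin in r0.
move/(_ (divr_ge0 (addr_ge0 r0 ler01) (ltW sp))); apply/negP; rewrite -ltNge ltrDl ltr01.
by [].
Qed.
Lemma emp_val (R : realType) (n N : nat) (data : 'I_N -> Z n R) (a : bool) :
  empirical data [set z : Z n R | z.2.1 = a] = (emp_marg data a)%:E.
Proof.
rewrite /empirical /emp_marg.
under eq_bigr do rewrite diracE.
rewrite sumEFin -EFinM mulrC; congr (EFin (_ * _)).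
rewrite (eq_bigr (fun i => if (data i).2.1 == a then 1 else 0)); last first.
  move=> i _; case: eqP => h.
    by rewrite mem_set.
  by rewrite memNset.
rewrite -big_mkcond /= sumr_const; congr (_%:R); apply: eq_card => i; rewrite [RHS]finset.inE unfold_in /= asboolb; by case: ((data i).2.1); case: a.

Qed.

Lemma key (R : realType) (n N : nat) (data : 'I_N -> Z n R) (alpha beta : R)
  (ha : 0 <= alpha) (hb : 0 <= beta) (Q : probability (Z n R) R)
  (pi : probability (Z n R * Z n R)%type R)
  (hc : coupling (empirical data) Q pi)
  (hI : (\int[pi]_w (cost alpha beta w.1 w.2 * cost alpha beta w.1 w.2) < +oo)%E)
  (a : bool) :
  Q [set z : Z n R | z.2.1 = a] = (emp_marg data a)%:E.
Proof.
case: hc => h1 h2.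
set B := [set z : Z n R | z.2.1 = a].
have mBa : forall b, measurable [set z : Z n R | z.2.1 = b] by move=> b; exact: mB.
have mF : forall b, measurable (fst @^-1` [set z : Z n R | z.2.1 = b] : set (Z n R * Z n R)).
  move=> b; have := @measurable_fst _ _ (Z n R) (Z n R) measurableT _ (mBa b).
  by rewrite setTI.
have mSn : forall b, measurable (snd @^-1` [set z : Z n R | z.2.1 = b] : set (Z n R * Z n R)).
  move=> b; have := @measurable_snd _ _ (Z n R) (Z n R) measurableT _ (mBa b).
  by rewrite setTI.
set S : set (Z n R * Z n R) :=
  (fst @^-1` [set z : Z n R | z.2.1 = true] `&` snd @^-1` [set z : Z n R | z.2.1 = false])
  `|` (fst @^-1` [set z : Z n R | z.2.1 = false] `&` snd @^-1` [set z : Z n R | z.2.1 = true]).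
have mS : measurable S.
  by apply: measurableU; apply: measurableI.
have hS : forall w, S w -> w.1.2.1 != w.2.2.1.
  by move=> w [[/= -> ->]|[/= -> ->]].
have pS := @null_S R n alpha beta ha hb pi S mS hS hI.
rewrite -emp_val -(h2 _ (mBa a)) -(h1 _ (mBa a)).
apply/eqP; rewrite eq_le; apply/andP; split.
- apply: (le_trans (y := pi (fst @^-1` B `|` S))).
    apply: le_measure; [exact: (mem_set (mSn a)) | apply: mem_set; apply: measurableU; [exact: mF | exact: mS] | ].
    move=> w /= wa; case E: (w.1.2.1 == a); first by left; apply/eqP.
    right; move: wa E; rewrite /B /=.
    case: w => [[x [b y]] [x0 [b0 y0]]] /= <-; rewrite /S /=; case: b; case: b0 => //= _; first [by left | by right].
  apply: (le_trans (measureU2 _ (mF a) mS)); set t := (X in (_ + X <= _)%E); have -> : t = 0%E by exact: pS.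
  by rewrite adde0.
- apply: (le_trans (y := pi (snd @^-1` B `|` S))).
    apply: le_measure; [exact: (mem_set (mF a)) | apply: mem_set; apply: measurableU; [exact: mSn | exact: mS] | ].
    move=> w /= wa; case E: (w.2.2.1 == a); first by left; apply/eqP.
    right; move: wa E; rewrite /B /=.
    case: w => [[x [b y]] [x0 [b0 y0]]] /= <-; rewrite /S /=; case: b; case: b0 => //= _; first [by left | by right].
  apply: (le_trans (measureU2 _ (mSn a) mS)); set t := (X in (_ + X <= _)%E); have -> : t = 0%E by exact: pS.
  by rewrite adde0.
Qed.

Theorem theorem1 (R : realType) (n N : nat) (hN : (0 < N)%N)
  (data : 'I_N -> Z n R) (alpha beta : R) (halpha : 0 <= alpha)
  (hbeta : 0 <= beta) (F : set (probability (Z n R) R))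
  (hfin : exists Q, F Q /\ (W2 alpha beta (empirical data) Q < +oo)%E) :
  ereal_inf [set W2 alpha beta (empirical data) Q | Q in F] =
  ereal_inf [set W2 alpha beta (empirical data) Q | Q in
    [set Q | F Q /\ forall a : bool,
       Q [set z : Z n R | z.2.1 = a] = (emp_marg data a)%:E]].
Proof.
apply/eqP; rewrite eq_le; apply/andP; split.
  apply: ereal_inf_le_tmp => x [Q [FQ _] <-]; by exists Q.
apply/ereal_infP => x [Q FQ <-].
case: (ltP (W2 alpha beta (empirical data) Q) +oo%E) => hW; last first.
  exact: le_trans (leey _) hW.
apply: ge_ereal_inf; exists (W2 alpha beta (empirical data) Q) => //.
exists Q => //; split => // a.
have [v [pi [hc ->]] hv] := ereal_inf_lt hW.
exact: (@key R n N data alpha beta halpha hbeta Q pi hc hv a).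
Qed.
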